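(* Let $m>1$ be an odd integer and let $p$ be the greatest prime dividing $m$. Then for every $\epsilon>0$, $$C_m(a)=o\!\left(a^{\log_p\left(\frac{p+1}{2}\right)+\epsilon}\right)\quad (a\to\infty).$$
   Context: For odd $m\in\mathbb{N}$, $C_m(a)=\#\{0\le s<a : m\nmid \binom{2^{s+1}}{2^s}\}$. *)

(* Defs.v *)
From Stdlib Require Import Reals.
From Coquelicot Require Import Coquelicot.
From mathcomp Require Import all_boot.

Definition Cm (m a : nat) : nat :=
  count (fun s => ~~ (m %| 'C(2 ^ s.+1, 2 ^ s))%N) (iota 0 a).

Definition gpd (m : nat) : nat := max_pdiv m.

Definition expo (p : nat) : R := Rdiv (ln (Rdiv (Rplus (INR p) R1) (IZR 2))) (ln (INR p)).

(* Main.v *)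
Require Import Defs.
From Stdlib Require Import Reals.
From Coquelicot Require Import Coquelicot.
From mathcomp Require Import all_boot.
Local Open Scope R_scope.

From Stdlib Require Import Lra.
From mathcomp Require Import zify cyclic.
Local Open Scope nat_scope.

Lemma div2_split n d : 0 < d -> n.*2 %/ d = (n %/ d).*2 + (d <= (n %% d).*2).
Proof.
move=> d0; rewrite {1}(divn_eq n d) -!muln2 mulnDl mulnAC.
rewrite divnMDl //.
have lt := ltn_pmod n d0.
case: leqP => h.
  have h2 : n %% d * 2 - d < d by lia.
  have -> : n %% d * 2 = 1 * d + (n %% d * 2 - d) by lia.
  by rewrite divnMDl // (divn_small h2) addn0.
by rewrite (divn_small h).
Qed.

Lemma logn_fact_ext q n N : prime q -> n < N ->
  logn q n`! = \sum_(1 <= i < N.+1) n %/ q ^ i.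
Proof.
move=> pq nN; rewrite logn_fact //.
rewrite [in RHS](big_cat_nat _ (n := n.+1)) //=; last by lia.
rewrite [X in _ = _ + X]big1_seq ?addn0 // => i /andP[_].
rewrite mem_iota => /andP[h1 _]; apply: divn_small.
apply: (leq_trans h1); apply: ltnW; apply: ltn_expl; exact: prime_gt1.
Qed.

Definition carries q n k := count (fun i => q ^ i <= (n %% q ^ i).*2) (iota 1 k).


Lemma carries_le_logn q n k : prime q -> carries q n k <= logn q 'C(n.*2, n).
Proof.
move=> pq.
have q0 : 0 < q by exact: prime_gt0.
set N := n.*2 + k.+1.
have hb := bin_fact (leq_addr n n : n <= n + n).
rewrite addnK addnn in hb.
have F : logn q (n.*2)`! = logn q 'C(n.*2, n) + (logn q n`!).*2.
  rewrite -hb lognM ?bin_gt0 ?muln_gt0 ?fact_gt0 //; last by rewrite -addnn leq_addr.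
  by rewrite lognM ?fact_gt0 // addnn.
rewrite (logn_fact_ext q (n.*2) N pq) in F; last by rewrite /N -addnn; lia.
rewrite (logn_fact_ext q n N pq) in F; last by rewrite /N -addnn; lia.
have E : \sum_(1 <= i < N.+1) n.*2 %/ q ^ i =
   (\sum_(1 <= i < N.+1) n %/ q ^ i).*2 + \sum_(1 <= i < N.+1) (q ^ i <= (n %% q ^ i).*2).
  rewrite -[(\sum_(1 <= i < N.+1) n %/ q ^ i).*2]addnn -!big_split /=.
  by apply: eq_bigr => i _; rewrite div2_split ?expn_gt0 ?q0 // addnn.
move: F; rewrite E addnC => /addIn F; rewrite -F.
rewrite /carries -sum1_count big_mkcond /=.
rewrite (big_cat_nat _ (n := k.+1)) //=; last by rewrite /N -addnn; lia.
rewrite -[X in X <= _]addn0 leq_add //.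
rewrite /index_iota subn1 /=; apply: eq_leq; apply: eq_bigr => i _; by case: ifP.
Qed.

Lemma carries_mod q n k : 0 < q -> carries q (n %% q ^ k) k = carries q n k.
Proof.
move=> q0; apply: eq_in_count => i; rewrite mem_iota => /andP[_ hi].
rewrite modn_dvdm //; apply: dvdn_exp2l; lia.
Qed.

Lemma carriesS q n k : carries q n k.+1 = carries q n k + (q ^ k.+1 <= (n %% q ^ k.+1).*2).
Proof.
rewrite /carries.
have -> : iota 1 k.+1 = iota 1 k ++ [:: k.+1] by rewrite -[k.+1]addn1 iotaD /= add1n addn1.
by rewrite count_cat /= addn0.
Qed.

Lemma count_blocks (P : pred nat) D Q :
  count P (iota 0 (D * Q)) = \sum_(d < D) count (fun r => P (d * Q + r)) (iota 0 Q).
Proof.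
elim: D => [|D IH]; first by rewrite mul0n big_ord0.
rewrite big_ord_recr /= -IH mulSn addnC iotaD count_cat add0n; congr (_ + _).
by rewrite -{1}[D * Q]addn0 iotaDl count_map.
Qed.

Lemma sub_in_count (T : eqType) (P1 P2 : pred T) s :
  {in s, forall x, P1 x -> P2 x} -> count P1 s <= count P2 s.
Proof.
elim: s => //= x s IH H; rewrite leq_add //.
  case: (boolP (P1 x)) => // /(H x); rewrite inE eqxx => /(_ isT) ->; done.
by apply: IH => y ys; apply: H; rewrite inE ys orbT.
Qed.

Definition Ncnt q k j := count (fun r => carries q r k < j) (iota 0 (q ^ k)).

Lemma Ncnt_bound h k j :
  Ncnt h.*2.+1 k j <= h.*2.+1 ^ j * k.+1 ^ j * h.+1 ^ k.
Proof.
set q := h.*2.+1.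
have q0 : 0 < q by [].
elim: k j => [|k IH] j.
  rewrite /Ncnt expn0 !exp1n !muln1.
  by apply: (leq_trans (count_size _ _)); rewrite size_iota expn_gt0.
rewrite /Ncnt expnS count_blocks.
set Q := q ^ k.
have Q0 : 0 < Q by rewrite expn_gt0.
pose A := Ncnt q k j; pose B := Ncnt q k j.-1.
have step : forall d : 'I_q, count (fun r => carries q (d * Q + r) k.+1 < j) (iota 0 Q)
    <= if d < h.+1 then A else B.
  move=> d; have dq := ltn_ord d.
  have ec : forall r, r < Q -> carries q (d * Q + r) k = carries q r k.
    by move=> r rQ; rewrite -[LHS]carries_mod // -/Q modnMDl modn_small.
  case: ifP => hd.
    apply: sub_in_count => r; rewrite mem_iota add0n => /andP[_ rQ].
    rewrite carriesS ec //; lia.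
  apply: sub_in_count => r; rewrite mem_iota add0n => /andP[_ rQ].
  rewrite carriesS ec // modn_small; last first.
    rewrite expnS -/Q.
    have h1 : d * Q + r < d.+1 * Q by rewrite mulSnr ltn_add2l.
    by apply: (leq_trans h1); rewrite leq_mul2r dq orbT.
  have -> : (q ^ k.+1 <= (d * Q + r).*2) = true.
    apply/idP; rewrite expnS -/Q -addnn.
    have : h.+1 <= d by rewrite leqNgt hd.
    rewrite /q; nia.
  rewrite addn1; lia.
apply: leq_trans; first by apply: leq_sum => d _; exact: step d.
rewrite -(big_mkord xpredT (fun d => if d < h.+1 then A else B)).
rewrite (big_cat_nat _ (n := h.+1)) //=; last by rewrite /q; lia.
rewrite (eq_big_nat _ _ (F2 := fun _ => A)); last first.
  by move=> i /andP[_ ->].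
rewrite [X in _ + X <= _](eq_big_nat _ _ (F2 := fun _ => B)); last first.
  by move=> i /andP[hi _]; rewrite ltnNge hi.
rewrite !sum_nat_const_nat subn0.
have hA : A <= q ^ j * k.+1 ^ j * h.+1 ^ k := IH j.
have N0 : forall k', Ncnt q k' 0 = 0.
  by move=> k'; rewrite /Ncnt (eq_count (a2 := pred0)) ?count_pred0 // => r; rewrite ltn0.
move: hA; rewrite /A /B; clear step A B.
case: j => [|j] hA; first by rewrite !N0 !muln0.
have hB := IH j.
have hqc : q - h.+1 = h by rewrite /q; lia.
rewrite hqc.
have XY : k.+1 ^ j <= k.+2 ^ j by elim: (j) => // j0 IHj; rewrite !expnS leq_mul.
move: hA hB XY; rewrite !expnS.
move: (Ncnt q k j.+1) (Ncnt q k j) (q ^ j) (k.+1 ^ j) (k.+2 ^ j) (h.+1 ^ k) => a b x y z w.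
rewrite /q => hA hB XY.
have e1 : h.*2.+1 * x * (k.+1 * y) * w = h.*2.+1 * (k.+1) * (y * (x * w)) by lia.
have e2 : x * y * w = y * (x * w) by lia.
have e3 : h.*2.+1 * x * (k.+2 * z) * (h.+1 * w) = h.*2.+1 * h.+1 * k.+2 * (z * (x * w)) by lia.
rewrite e1 in hA; rewrite e2 in hB; rewrite e3.
have yz : y * (x * w) <= z * (x * w) by rewrite leq_mul2r XY orbT.
move: hA hB yz; move: (y * (x * w)) (z * (x * w)) => Y Z hA hB yz.
apply: (leq_trans (leq_add (leq_mul (leqnn h.+1) hA) (leq_mul (leqnn h) hB))).
apply: (@leq_trans (h.*2.+1 * h.+1 * k.+2 * Y)); last by rewrite leq_mul2l yz orbT.
have : h.+1 * (h.*2.+1 * k.+1 * Y) + h * Y = h.*2.+1 * h.+1 * k.+1 * Y + h * Y by lia.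
move=> ->.
have : h.*2.+1 * h.+1 * k.+2 * Y = h.*2.+1 * h.+1 * k.+1 * Y + h.*2.+1 * h.+1 * Y by lia.
move=> ->; rewrite leq_add2l leq_mul2r; apply/orP; right; lia.
Qed.

Definition Sg y n := \sum_(i < n) y ^ i.

Lemma pow_form y n : 0 < y -> y ^ n = 1 + (y - 1) * Sg y n.
Proof.
case: y => [|y] // _.
elim: n => [|n IH]; first by rewrite /Sg big_ord0 muln0.
rewrite /Sg big_ord_recr /= -/(Sg _ _) mulnDr addnA -IH expnS subn1 /=; lia.
Qed.

Lemma powS_mod q u n : exists z, (1 + q * u) ^ n = 1 + n * (q * u) + q ^ 2 * z.
Proof.
elim: n => [|n [z IH]]; first by exists 0; rewrite expn0 muln0.
exists (n * u * u + z + z * q * u).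
rewrite expnS IH; lia.
Qed.

Lemma Sg_mod q u n : exists z,
  Sg (1 + q * u) n = n + q * u * (\sum_(i < n) i) + q ^ 2 * z.
Proof.
elim: n => [|n [z IH]]; first by exists 0; rewrite /Sg !big_ord0 !muln0.
have [z' hz'] := powS_mod q u n.
exists (z + z').
rewrite /Sg big_ord_recr /= -/(Sg _ _) IH hz' big_ord_recr /=; lia.
Qed.

Lemma tri_sum h : \sum_(i < h.*2.+1) i = h.*2.+1 * h.
Proof.
have : forall n, (\sum_(i < n) i) * 2 = n * n.-1.
  elim=> [|n IH]; first by rewrite big_ord0.
  rewrite big_ord_recr /= mulnDl IH; case: n {IH} => //= n; lia.
move=> /(_ h.*2.+1) /=; lia.
Qed.

Lemma coprime_addmul q r X : coprime q (r + q * X) = coprime q r.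
Proof. by rewrite -[LHS]coprime_modr addnC mulnC modnMDl coprime_modr. Qed.

Lemma lte_q q h w : prime q -> q = h.*2.+1 -> 0 < w -> q %| w ->
  exists w', (1 + w) ^ q = 1 + w' /\ 0 < w' /\ q %| w' /\ logn q w' = (logn q w).+1.
Proof.
move=> pq qh w0 /dvdnP[u wu].
have q0 := prime_gt0 pq.
have [z hz] := Sg_mod q u q.
have T : \sum_(i < q) i = q * h by rewrite qh tri_sum.
rewrite T in hz.
set v := 1 + q * (u * h + z).
have Sv : Sg (1 + q * u) q = q * v by rewrite hz /v; lia.
have u0 : 0 < u by move: w0; rewrite wu muln_gt0 => /andP[].
exists (w * (q * v)).
have Sv' : Sg (1 + w) q = q * v by rewrite wu [u * q]mulnC Sv.
rewrite pow_form ?addn_gt0 ?orTb // addKn Sv'.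
have v0 : 0 < v by rewrite /v addn_gt0.
split=> //; split; first by rewrite !muln_gt0 w0 q0 v0.
split; first by rewrite dvdn_mull // dvdn_mulr.
have lq : logn q q = 1 by have := pfactorK 1 pq; rewrite expn1.
rewrite lognM ?muln_gt0 ?q0 ?v0 // lognM // lq.
have -> : logn q v = 0.
  have cv : coprime q v by rewrite /v coprime_addmul coprimen1.
  by rewrite prime_coprime // in cv; rewrite lognE (negbTE cv) !andbF.
by rewrite addn0 addn1.
Qed.

Lemma lte_r q w r : prime q -> 0 < w -> q %| w -> coprime q r -> 0 < r ->
  exists w', (1 + w) ^ r = 1 + w' /\ 0 < w' /\ logn q w' = logn q w.
Proof.
move=> pq w0 /dvdnP[u wu] cqr r0.
have q0 := prime_gt0 pq.
have [z hz] := Sg_mod q u r.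
have u0 : 0 < u by move: w0; rewrite wu muln_gt0 => /andP[].
set S := Sg (1 + q * u) r.
have S0 : 0 < S by rewrite /S hz; lia.
have cS : coprime q S.
  rewrite /S hz -addnA.
  have -> : q * u * (\sum_(i < r) i) + q ^ 2 * z = q * (u * (\sum_(i < r) i) + q * z) by lia.
  by rewrite coprime_addmul.
exists (w * S).
have S' : Sg (1 + w) r = S by rewrite wu [u * q]mulnC.
rewrite pow_form ?addn_gt0 ?orTb // addKn S'.
split=> //; split; first by rewrite muln_gt0 w0 S0.
by rewrite mulnC logn_Gauss.
Qed.

Lemma lte_iter q h w j : prime q -> q = h.*2.+1 -> 0 < w -> q %| w ->
  exists w', (1 + w) ^ (q ^ j) = 1 + w' /\ 0 < w' /\ q %| w' /\ logn q w' = logn q w + j.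
Proof.
move=> pq qh w0 qw; elim: j => [|j [w1 [e1 [p1 [d1 l1]]]]].
  by exists w; rewrite expn0 expn1 addn0.
have [w2 [e2 [p2 [d2 l2]]]] := lte_q _ _ _ pq qh p1 d1.
exists w2; rewrite expnS mulnC expnM e1 e2 l2 l1 addnS; done.
Qed.

Definition c0 q := logn q (2 ^ totient q - 1).

Lemma ord_bound q h k t : prime q -> q = h.*2.+1 -> 0 < t ->
  q ^ k %| 2 ^ t - 1 -> q ^ (k - c0 q) <= t.
Proof.
move=> pq qh t0 dk.
have q0 := prime_gt0 pq.
set T := totient q.
have T0 : 0 < T by rewrite totient_gt0.
have oq : odd q by rewrite qh /= odd_double.
have eu := Euler_exp_totient (_ : coprime 2 q); rewrite coprime2n oq -/T in eu.
move: (eu isT) => {}eu.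
have x1 : 1 <= 2 ^ T by rewrite expn_gt0.
have qw : q %| 2 ^ T - 1 by rewrite -eqn_mod_dvd // eu.
have w0 : 0 < 2 ^ T - 1.
  have : 2 ^ 1 <= 2 ^ T by rewrite leq_exp2l.
  rewrite expn1; lia.
have [r cr tr] := pfactor_coprime pq t0.
set j := logn q t in tr.
have r0 : 0 < r by move: t0; rewrite tr muln_gt0 => /andP[].
have [w1 [e1 [p1 [d1 l1]]]] := lte_iter _ _ _ j pq qh w0 qw.
have [w2 [e2 [p2 l2]]] := lte_r _ _ _ pq p1 d1 cr r0.
have ex : (2 ^ T) ^ t = 1 + w2.
  have -> : 2 ^ T = 1 + (2 ^ T - 1) by lia.
  by rewrite tr mulnC expnM e1 e2.
have dw : q ^ k %| w2.
  have := pow_form (2 ^ t) T; rewrite expn_gt0 => /(_ isT).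
  rewrite -expnM mulnC expnM ex => /eqP; rewrite eqn_add2l => /eqP ->.
  exact: dvdn_mulr.
rewrite pfactor_dvdn // l2 l1 -/(c0 q) in dw.
apply: (@leq_trans (q ^ j)).
  by apply: leq_pexp2l => //; lia.
rewrite tr; apply: dvdn_leq; [by rewrite muln_gt0 r0 expn_gt0 q0 | exact: dvdn_mull].
Qed.

Lemma count_inj_le (g : nat -> nat) (P : pred nat) s Q :
  uniq s -> {in s &, injective g} -> (forall x, g x < Q) ->
  count (fun x => P (g x)) s <= count P (iota 0 Q).
Proof.
move=> us ig gQ.
rewrite -(count_map g P) -!size_filter.
apply: uniq_leq_size.
  by rewrite filter_uniq // map_inj_in_uniq.
move=> y; rewrite !mem_filter => /andP[-> /mapP[x _ ->]] /=.
by rewrite mem_iota add0n gQ.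
Qed.

Lemma no_coll q h k b r1 r2 : prime q -> q = h.*2.+1 -> r1 < r2 ->
  r2 < r1 + q ^ (k - c0 q) -> 2 ^ (b + r1) %% q ^ k <> 2 ^ (b + r2) %% q ^ k.
Proof.
move=> pq qh lt12 lt2 /eqP E.
have oq : odd q by rewrite qh /= odd_double.
set t := r2 - r1.
have t0 : 0 < t by rewrite /t; lia.
have e2 : 2 ^ (b + r2) = (2 ^ t) * 2 ^ (b + r1) by rewrite -expnD /t; congr (2 ^ _); lia.
have le : 2 ^ (b + r1) <= 2 ^ (b + r2) by rewrite leq_exp2l //; lia.
rewrite eq_sym eqn_mod_dvd // e2 -{2}(mul1n (2 ^ (b + r1))) -mulnBl in E.
rewrite Gauss_dvdl in E; last by apply: coprimeXl; apply: coprimeXr; rewrite coprimen2.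
have := ord_bound _ _ _ _ pq qh t0 E; rewrite /t; lia.
Qed.

Lemma window q h k b (P : pred nat) : prime q -> q = h.*2.+1 ->
  count (fun r => P (2 ^ (b + r) %% q ^ k)) (iota 0 (q ^ (k - c0 q)))
  <= count P (iota 0 (q ^ k)).
Proof.
move=> pq qh.
have q0 := prime_gt0 pq.
apply: (count_inj_le (fun r => 2 ^ (b + r) %% q ^ k)).
- exact: iota_uniq.
- move=> r1 r2; rewrite !mem_iota !add0n => /andP[_ h1] /andP[_ h2] E.
  case: (ltngtP r1 r2) => // c.
    by exfalso; apply: (no_coll _ _ _ b _ _ pq qh c _ E); lia.
  by exfalso; apply: (no_coll _ _ _ b _ _ pq qh c _ (esym E)); lia.
- by move=> x; rewrite ltn_pmod // expn_gt0 q0.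
Qed.

Definition cntq q e a := count (fun s => ~~ (q ^ e %| 'C(2 ^ s.+1, 2 ^ s))) (iota 0 a).

Lemma cntq_bound q h e a : prime q -> q = h.*2.+1 -> 0 < a ->
  cntq q e a <= q * (q ^ e * (c0 q + trunc_log q a).+1 ^ e * h.+1 ^ (c0 q + trunc_log q a)).
Proof.
move=> pq qh a0.
have q0 := prime_gt0 pq.
have q1 := prime_gt1 pq.
set K1 := trunc_log q a.
set k := c0 q + K1.
pose P := fun x => carries q x k < e.
have S1 : cntq q e a <= count (fun s => P (2 ^ s %% q ^ k)) (iota 0 a).
  apply: sub_count => s /=; rewrite /P carries_mod //.
  have B0 : 0 < 'C(2 ^ s.+1, 2 ^ s) by rewrite bin_gt0 leq_exp2l.
  rewrite pfactor_dvdn // -ltnNge => H.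
  apply: leq_ltn_trans H.
  have := carries_le_logn q (2 ^ s) k pq; by rewrite -mul2n -expnS.
apply: (leq_trans S1).
have kL : k - c0 q = K1 by rewrite /k addKn.
have aL : a <= q * q ^ (k - c0 q).
  rewrite kL -expnS; apply: ltnW; exact: trunc_log_ltn.
apply: (@leq_trans (count (fun s => P (2 ^ s %% q ^ k)) (iota 0 (q * q ^ (k - c0 q))))).
  by rewrite -(subnKC aL) iotaD count_cat leq_addr.
rewrite count_blocks.
apply: (@leq_trans (\sum_(d < q) Ncnt q k e)).
  apply: leq_sum => d _; exact: (window q h k (d * q ^ (k - c0 q)) P pq qh).
rewrite sum_nat_const card_ord leq_mul2l; apply/orP; right.
have := Ncnt_bound h k e; by rewrite -qh.
Qed.

Lemma pi_primes p n : (p \in \pi(n)) = (p \in primes n).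
Proof. by []. Qed.

Lemma expn_mono_base x y n : x <= y -> x ^ n <= y ^ n.
Proof. by move=> h; elim: n => // n IH; rewrite !expnS leq_mul. Qed.

Lemma cntq_bound2 q h e a m : prime q -> q = h.*2.+1 -> 0 < a -> e <= m ->
  cntq q e a <= (q * q ^ e * (c0 q).+1 ^ m * h.+1 ^ (c0 q)) *
                ((trunc_log q a).+1 ^ m * h.+1 ^ (trunc_log q a)).
Proof.
move=> pq qh a0 em.
apply: (leq_trans (cntq_bound _ _ e _ pq qh a0)).
set c := c0 q; set K := trunc_log q a.
have E1 : (c + K).+1 ^ e <= (c.+1 ^ m * K.+1 ^ m).
  rewrite -expnMn; apply: (@leq_trans ((c + K).+1 ^ m)).
    by apply: leq_pexp2l.
  by apply: expn_mono_base; nia.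
rewrite expnD.
move: E1; move: ((c + K).+1 ^ e) (c.+1 ^ m) (K.+1 ^ m) (h.+1 ^ c) (h.+1 ^ K) (q ^ e) => X Y Z U V W E1.
have : W * X * (U * V) <= W * (Y * Z) * (U * V) by rewrite !leq_mul.
nia.
Qed.

Lemma has_sum (T : eqType) (f : pred T) l : has f l -> 0 < \sum_(q <- l) f q.
Proof.
elim: l => //= x l IH; rewrite big_cons; case/orP => [->|/IH]; first by [].
by move=> h; rewrite addn_gt0 h orbT.
Qed.

Lemma count_le_sum (T : eqType) (l : seq T) (Ps : T -> pred nat) (P : pred nat) s :
  (forall x, P x -> has (fun q => Ps q x) l) ->
  count P s <= \sum_(q <- l) count (Ps q) s.
Proof.
move=> H; elim: s => [|x s IH] /=; first by rewrite big1.
rewrite big_split /= leq_add //.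
case: (boolP (P x)) => // /H /has_sum; done.
Qed.

Lemma Cm_split m a : 0 < m -> Cm m a <= \sum_(q <- primes m) cntq q (logn q m) a.
Proof.
move=> m0; apply: count_le_sum => s nd.
rewrite -[has _ _]negbK -all_predC; apply/negP => /allP H.
move/negP: nd; apply; apply/dvdn_partP => // q.
rewrite pi_primes => /H /=; rewrite negbK p_part; done.
Qed.

Local Open Scope R_scope.
Lemma exp_mono x y : x <= y -> exp x <= exp y.
Proof.
move=> h; case: (Rle_lt_or_eq_dec _ _ h) => [l|->]; last lra.
by apply: Rlt_le; apply: exp_increasing.
Qed.

Lemma ln_mono x y : 0 < x -> x <= y -> ln x <= ln y.
Proof.
move=> x0 h; case: (Rle_lt_or_eq_dec _ _ h) => [l|->]; last lra.
by apply: Rlt_le; apply: ln_increasing.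
Qed.

Lemma ln_le_sub1 t : 0 < t -> ln t <= t - 1.
Proof.
move=> t0; have := exp_ineq1_le (ln t); rewrite exp_ln //; lra.
Qed.

Lemma amgm z al : 0 < z -> 0 <= al <= 1 -> exp (al * ln z) <= al * z + 1 - al.
Proof.
move=> z0 [a0 a1].
set w := al * z + 1 - al.
have w0 : 0 < w.
  rewrite /w; destruct (Rle_lt_or_eq_dec _ _ a1) as [h|h].
    have : 0 <= al * z by apply: Rmult_le_pos; lra.
    lra.
  rewrite h; lra.
have h1 := ln_le_sub1 (z / w) (Rdiv_lt_0_compat _ _ z0 w0).
have h2 := ln_le_sub1 (1 / w) (Rdiv_lt_0_compat _ _ Rlt_0_1 w0).
rewrite ln_div // in h1; rewrite ln_div ?ln_1 // in h2; try lra.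
have key : al * ln z <= ln w.
  have e : al * (z / w - 1) + (1 - al) * (1 / w - 1) = 0.
    rewrite /w; field; apply: Rgt_not_eq; exact: w0.
  have := Rmult_le_compat_l _ _ _ a0 (Rplus_le_compat_r (- ln w) _ _ h1).
  have := Rmult_le_compat_l _ _ _ (_ : 0 <= 1 - al) h2.
  nra.
rewrite -(exp_ln w) //; exact: exp_mono.
Qed.

Lemma ln3_ge1 : 1 <= ln 3.
Proof.
rewrite -(ln_exp 1); apply: ln_mono; [exact: exp_pos | exact: exp_le_3].
Qed.

Lemma f_mono x y : 3 <= x -> x <= y ->
  ln ((x + 1) / 2) / ln x <= ln ((y + 1) / 2) / ln y.
Proof.
move=> x3 xy.
have lx : 1 <= ln x by apply: (Rle_trans _ _ _ ln3_ge1); apply: ln_mono; lra.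
have ly : ln x <= ln y by apply: ln_mono; lra.
set M := (y + 1) / 2.
have M0 : 0 < M by rewrite /M; lra.
set al := ln x / ln y.
have iy : 0 < / ln y by apply: Rinv_0_lt_compat; lra.
have a0 : 0 <= al by rewrite /al /Rdiv; apply: Rmult_le_pos; lra.
have a1 : al <= 1.
  rewrite /al /Rdiv -(Rinv_r (ln y)); last lra.
  apply: Rmult_le_compat_r; lra.
have alx : al * ln y = ln x by rewrite /al; field; lra.
set A := al * ln M.
have h1 := amgm (y / M) al (Rdiv_lt_0_compat _ _ (ltac:(lra) : 0 < y) M0) (conj a0 a1).
have h2 := amgm (1 / M) al (Rdiv_lt_0_compat _ _ Rlt_0_1 M0) (conj a0 a1).
rewrite ln_div in h1; try lra.
rewrite ln_div ?ln_1 in h2; try lra.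
have e1 : al * (ln y - ln M) = ln x + - A by rewrite /A -alx; ring.
have e2 : al * (0 - ln M) = - A by rewrite /A; ring.
rewrite e1 exp_plus exp_ln in h1; last lra.
rewrite e2 in h2.
have s : (x + 1) * exp (- A) <= 2.
  have : al * (y / M) + 1 - al + (al * (1 / M) + 1 - al) = 2.
    rewrite /M; field; lra.
  nra.
have key : (x + 1) / 2 <= exp A.
  have eA : exp (- A) * exp A = 1 by rewrite -exp_plus Rplus_opp_l exp_0.
  have := exp_pos A; have := exp_pos (- A); nra.
have lk : ln ((x + 1) / 2) <= A.
  rewrite -(ln_exp A); apply: ln_mono => //; lra.
rewrite /A /al in lk.
apply Rmult_le_reg_r with (ln x); first lra.
have -> : ln ((x + 1) / 2) / ln x * ln x = ln ((x + 1) / 2) by field; lra.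
have -> : ln M / ln y * ln x = ln x / ln y * ln M by field; lra.
exact: lk.
Qed.

Lemma INR_muln x y : INR (x * y)%N = INR x * INR y.
Proof. by rewrite -multE mult_INR. Qed.

Lemma INR_addn x y : INR (x + y)%N = INR x + INR y.
Proof. by rewrite -plusE plus_INR. Qed.

Lemma INR_expn x n : INR (x ^ n)%N = INR x ^ n.
Proof. elim: n => [|n IH] //=; by rewrite expnS INR_muln IH. Qed.

Lemma INR_ge3 q : (3 <= q)%N -> 3 <= INR q.
Proof. move=> h; have := le_INR 3 q (ssrnat.leP h); simpl; lra. Qed.

Lemma lnq_ge1 q : (3 <= q)%N -> 1 <= ln (INR q).
Proof.
move=> h; apply: (Rle_trans _ _ _ ln3_ge1); apply: ln_mono; [lra | exact: (INR_ge3 _ h)].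
Qed.

Lemma trunc_ln q a : (3 <= q)%N -> (0 < a)%N ->
  INR (trunc_log q a) * ln (INR q) <= ln (INR a).
Proof.
move=> q3 a0.
have q1 : (1 < q)%N by apply: leq_trans q3.
have h := trunc_logP q1 a0.
have q0 : 0 < INR q by have := INR_ge3 _ q3; lra.
rewrite -ln_pow //; apply: ln_mono.
  by apply: pow_lt.
rewrite -INR_expn; apply: le_INR; exact/ssrnat.leP.
Qed.

Lemma expo_mono q p : (3 <= q)%N -> (q <= p)%N -> expo q <= expo p.
Proof.
move=> q3 qp; rewrite /expo.
have := f_mono (INR q) (INR p) (INR_ge3 _ q3) (le_INR _ _ (ssrnat.leP qp)).
by [].
Qed.

Lemma real_q m q h a : q = h.*2.+1 -> (3 <= q)%N -> (q <= gpd m)%N -> (0 < a)%N ->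
  INR ((trunc_log q a).+1 ^ m * h.+1 ^ (trunc_log q a))%N
  <= (ln (INR a) + 1) ^ m * Rpower (INR a) (expo (gpd m)).
Proof.
move=> qh q3 qp a0.
set K := trunc_log q a.
have hK := trunc_ln q a q3 a0; rewrite -/K in hK.
have lq := lnq_ge1 q q3.
have Kp := pos_INR K.
have la : 0 <= ln (INR a).
  have : 1 <= INR a by have := le_INR 1 a (ssrnat.leP a0); simpl; lra.
  move=> h1; rewrite -ln_1; apply: ln_mono; lra.
rewrite INR_muln !INR_expn.
apply: Rmult_le_compat.
- apply: pow_le; exact: pos_INR.
- apply: pow_le; exact: pos_INR.
- apply: pow_incr; split; first exact: pos_INR.
  rewrite S_INR; nra.
have ch : INR h.+1 = (INR q + R1) / IZR 2.
  rewrite qh !S_INR -mul2n INR_muln /=; field.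
have c1 : 1 <= INR h.+1 by rewrite S_INR; have := pos_INR h; lra.
have c0 : 0 < INR h.+1 by lra.
rewrite -(exp_ln (INR h.+1 ^ K)); last by apply: pow_lt.
rewrite ln_pow // /Rpower; apply: exp_mono.
have fq : expo q <= expo (gpd m) by apply: expo_mono.
have f0 : 0 <= expo q.
  rewrite /expo -ch /Rdiv; apply: Rmult_le_pos.
    rewrite -ln_1; apply: ln_mono; lra.
  apply: Rlt_le; apply: Rinv_0_lt_compat; lra.
have e : ln (INR h.+1) = expo q * ln (INR q) by rewrite /expo -ch; field; lra.
rewrite e.
apply: (Rle_trans _ (expo q * ln (INR a))).
  have := Rmult_le_compat_l _ _ _ f0 hK; lra.
by apply: Rmult_le_compat_r.
Qed.

Lemma sum_INR_le (l : seq nat) (K X : nat -> nat) (Y : R) :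
  (forall q, q \in l -> INR (X q) <= Y) ->
  INR (\sum_(q <- l) K q * X q)%N <= INR (\sum_(q <- l) K q)%N * Y.
Proof.
elim: l => [|x l IH] H; first by rewrite !big_nil /=; lra.
rewrite !big_cons !INR_addn INR_muln Rmult_plus_distr_r.
apply: Rplus_le_compat.
  apply: Rmult_le_compat_l; first exact: pos_INR.
  by apply: H; rewrite inE eqxx.
by apply: IH => q ql; apply: H; rewrite inE ql orbT.
Qed.

Lemma Cm_bound m : odd m -> (1 < m)%N -> exists K : nat, forall a, (0 < a)%N ->
  INR (Cm m a) <= INR K * ((ln (INR a) + 1) ^ m * Rpower (INR a) (expo (gpd m))).
Proof.
move=> om m1.
have m0 : (0 < m)%N by apply: ltnW.
pose Kf q := (q * q ^ (logn q m) * (c0 q).+1 ^ m * (q./2).+1 ^ (c0 q))%N.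
exists (\sum_(q <- primes m) Kf q)%N => a a0.
pose Xf q := ((trunc_log q a).+1 ^ m * (q./2).+1 ^ (trunc_log q a))%N.
have facts : forall q, q \in primes m ->
   [/\ prime q, q = (q./2).*2.+1, (3 <= q)%N, (q <= gpd m)%N & (logn q m <= m)%N].
  move=> q qm; have := qm; rewrite mem_primes => /and3P[pq _ qdm].
  have oq : odd q.
    case: (even_prime pq) => // q2; move: qdm; rewrite q2 dvdn2 om //.
  split => //.
  - by have := odd_double_half q; rewrite oq add1n.
  - exact: odd_prime_gt2.
  - by apply: max_pdiv_max; rewrite pi_primes.
  - by apply: ltnW; apply: ltn_logl.
have N1 : (Cm m a <= \sum_(q <- primes m) Kf q * Xf q)%N.
  apply: (leq_trans (Cm_split m a m0)).
  rewrite big_seq_cond [X in (_ <= X)%N]big_seq_cond; apply: leq_sum => q /andP[qm _].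
  have [pq qh q3 qp lm] := facts q qm.
  exact: cntq_bound2.
apply: (Rle_trans _ _ _ (le_INR _ _ (ssrnat.leP N1))).
apply: sum_INR_le => q qm.
have [pq qh q3 qp lm] := facts q qm.
exact: real_q.
Qed.

Lemma exp_INR_mul n x : exp (INR n * x) = exp x ^ n.
Proof.
elim: n => [|n IH]; first by rewrite /= Rmult_0_l exp_0.
by rewrite S_INR Rmult_plus_distr_r Rmult_1_l exp_plus IH /=; ring.
Qed.

Theorem theorem3p2 (m : nat) (Hodd : odd m) (Hm : (1 < m)%N)
  (eps : R) (Heps : 0 < eps) :
  is_lim_seq
    (fun a : nat => Rdiv (INR (Cm m a)) (Rpower (INR a) (Rplus (expo (gpd m)) eps)))
    (Rbar.Finite 0).
Proof.
have [K HK] := Cm_bound m Hodd Hm.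
set E := expo (gpd m).
set n1 := S m.
have n10 : 0 < INR n1 by apply: lt_0_INR; lia.
set dl := eps / INR n1.
have dl0 : 0 < dl by apply: Rdiv_lt_0_compat.
set d1 := Rmin dl 1.
have d10 : 0 < d1 by apply: Rmin_pos; lra.
have d1a : d1 <= dl by apply: Rmin_l.
have d1b : d1 <= 1 by apply: Rmin_r.
set C := INR K / d1 ^ n1.
apply: (is_lim_seq_le_le_loc (fun _ => 0) _ (fun a => C * / (ln (INR a) + 1))).
- exists 1%nat => a Ha.
  have a0 : (0 < a)%N by apply/ssrnat.leP.
  set L := ln (INR a).
  have L0 : 0 <= L.
    have : 1 <= INR a by have := le_INR 1 a Ha; simpl; lra.
    move=> h1; rewrite /L -ln_1; apply: ln_mono; lra.
  have D0 : 0 < Rpower (INR a) (E + eps) by apply: exp_pos.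
  split.
    apply: Rmult_le_pos; first exact: pos_INR.
    by apply: Rlt_le; apply: Rinv_0_lt_compat.
  have HN := HK a a0; rewrite -/L in HN.
  set P := (L + 1) ^ m in HN.
  have P0 : 0 < P by apply: pow_lt; lra.
  have eD : Rpower (INR a) (E + eps) = Rpower (INR a) E * exp (eps * L).
    by rewrite /Rpower -exp_plus /L; congr exp; ring.
  set X := Rpower (INR a) E in HN eD.
  have X0 : 0 < X by apply: exp_pos.
  set Z := (d1 * (L + 1)) ^ n1.
  have Z0 : 0 < Z by apply: pow_lt; nra.
  have hZ : Z <= exp (eps * L).
    have -> : eps * L = INR n1 * (dl * L) by rewrite /dl; field; lra.
    rewrite exp_INR_mul; apply: pow_incr; split; first nra.
    have := exp_ineq1_le (dl * L); nra.
  have eZ : Z = d1 ^ n1 * P * (L + 1) by rewrite /Z /P Rpow_mult_distr /n1 /=; ring.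
  rewrite eD.
  apply: (Rle_trans _ (INR K * (P * X) * / (X * Z))).
    apply: Rmult_le_compat; try lra.
    - exact: pos_INR.
    - by apply: Rlt_le; apply: Rinv_0_lt_compat; nra.
    - apply: Rinv_le_contravar; first nra.
      by apply: Rmult_le_compat_l; lra.
  have pd : 0 < d1 ^ n1 by apply: pow_lt.
  rewrite eZ /C; apply: Req_le; field; repeat split; lra.
- exact: is_lim_seq_const.
- have H1 : is_lim_seq (fun a => ln (INR a) + 1) p_infty.
    apply: (is_lim_seq_plus _ _ p_infty 1 p_infty).
    + apply: (is_lim_comp_seq ln INR p_infty p_infty is_lim_ln_p) => //.
      * by exists 0%nat.
      * exact: is_lim_seq_INR.
    + exact: is_lim_seq_const.
    + by [].
  have H2 := is_lim_seq_inv _ _ H1 (ltac:(discriminate)).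
  have H3 := is_lim_seq_scal_l _ C _ H2.
  by rewrite /= Rmult_0_r in H3.
Qed.
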